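(* Let $N, P, T$ be positive integers and let $0 < a < 1$, $b > 0$, $\epsilon > 0$. For $t = 1, \dots, T$ let $A(t) \in \mathbb{R}^{N \times N}$ satisfy $\|A(t)\|_2 \le a \cdot e^{t-T}$, let $B \in \mathbb{R}^{N \times P}$ satisfy $\|B\|_2 \le b$, let $x(t) \in \mathbb{R}^{P \times 1}$ be arbitrary inputs, and let $\delta_x(t) \in \mathbb{R}^{P \times 1}$ satisfy $\|\delta_x(t)\|_2 \le \epsilon$; set $\overline{x}(t) = x(t) + \delta_x(t)$. Define the state sequences $h(t), \overline{h}(t) \in \mathbb{R}^{N \times 1}$ by $h(0) = \overline{h}(0) = 0$ and, for $1 \le t \le T$, $$h(t) = A(t)\, h(t-1) + B\, x(t), \qquad \overline{h}(t) = A(t)\, \overline{h}(t-1) + B\, \overline{x}(t).$$ Let $\Delta(t) = \overline{h}(t) - h(t)$. Then for every $1 \le t \le T$, $$\|\Delta(t)\|_2 \le \epsilon b \left( \frac{1}{1 - a e^{t-T}} \right),$$ and consequently $\|\Delta(T)\|_2 \le \dfrac{\epsilon b}{1-a}$.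
   Context: $\|\cdot\|_2$ denotes the Euclidean norm for vectors and the spectral norm (operator 2-norm) for matrices. The sequence $\overline{h}$ models the state of the recurrence when the input at each step carries a quantization error $\delta_x(t)$. *)

(* Defs.v *)
From HB Require Import structures.
From mathcomp Require Import all_boot all_order all_algebra.
From mathcomp Require Import all_classical all_reals all_analysis.
Set Implicit Arguments. Unset Strict Implicit. Unset Printing Implicit Defensive.
Import Order.TTheory GRing.Theory Num.Theory.
Local Open Scope ring_scope.
Local Open Scope classical_set_scope.

Definition enorm {R : realType} {m n : nat} (v : 'M[R]_(m, n)) : R :=
  Num.sqrt (\sum_(i < m) \sum_(j < n) v i j ^+ 2).

Definition specnorm {R : realType} {m n : nat} (A : 'M[R]_(m, n)) : R :=
  sup [set enorm (A *m v) | v in [set v : 'cV[R]_n | enorm v <= 1]].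

Fixpoint hstate {R : realType} {N P : nat} (A : nat -> 'M[R]_N)
  (B : 'M[R]_(N, P)) (x : nat -> 'cV[R]_P) (t : nat) : 'cV[R]_N :=
  match t with
  | 0 => 0
  | t'.+1 => A t'.+1 *m hstate A B x t' + B *m x t'.+1
  end.

(* Main.v *)
Require Import Defs.
From HB Require Import structures.
From mathcomp Require Import all_boot all_order all_algebra.
From mathcomp Require Import all_classical all_reals all_analysis.
From mathcomp Require Import ring lra.
Import Order.TTheory GRing.Theory Num.Theory.
Local Open Scope ring_scope.

Section Aux.
Set Implicit Arguments.
Context {R : realType}.
Local Open Scope classical_set_scope.

Lemma enormE n (v : 'cV[R]_n) : enorm v = Num.sqrt (\sum_i v i 0 ^+ 2).
Proof. by rewrite /enorm; congr Num.sqrt; apply: eq_bigr => i _; rewrite big_ord1. Qed.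

Lemma enorm_ge0 n (v : 'cV[R]_n) : 0 <= enorm v.
Proof. exact: sqrtr_ge0. Qed.

Lemma enorm_coord n (v : 'cV[R]_n) i : `|v i 0| <= enorm v.
Proof.
rewrite enormE -sqrtr_sqr ler_sqrt; last by apply: sumr_ge0 => j _; exact: sqr_ge0.
rewrite (bigD1 i) //= lerDl; apply: sumr_ge0 => j _; exact: sqr_ge0.
Qed.

Lemma enormZ n c (v : 'cV[R]_n) : enorm (c *: v) = `|c| * enorm v.
Proof.
rewrite !enormE -sqrtr_sqr -sqrtrM ?sqr_ge0 //; congr Num.sqrt.
rewrite mulr_sumr; apply: eq_bigr => i _; rewrite mxE exprMn //.
Qed.

Lemma enorm_sq n (v : 'cV[R]_n) : enorm v ^+ 2 = \sum_i v i 0 ^+ 2.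
Proof. by rewrite enormE sqr_sqrtr //; apply: sumr_ge0 => j _; exact: sqr_ge0. Qed.

Lemma enorm0 n (v : 'cV[R]_n) : enorm v = 0 -> v = 0.
Proof.
move=> h; apply/matrixP => i j; rewrite (ord1 j) mxE.
by apply/normr0_eq0; apply/le_anti; rewrite normr_ge0 -h enorm_coord.
Qed.

Lemma cs_sum n (u v : 'cV[R]_n) : \sum_i u i 0 * v i 0 <= enorm u * enorm v.
Proof.
have [u0|] := eqVneq (enorm u) 0.
  by rewrite (enorm0 _ u0) big1 ?mulr_ge0 ?enorm_ge0 // => i _; rewrite mxE mul0r.
have [v0|] := eqVneq (enorm v) 0.
  by rewrite (enorm0 _ v0) big1 ?mulr_ge0 ?enorm_ge0 // => i _; rewrite mxE mulr0.
move=> nv nu.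
have s0 : 0 < enorm u by rewrite lt_def nu enorm_ge0.
have t0 : 0 < enorm v by rewrite lt_def nv enorm_ge0.
set s := enorm u in s0 nu *; set t := enorm v in t0 nv *.
have key : forall i, u i 0 * v i 0 <= ((t / s) * u i 0 ^+ 2 + (s / t) * v i 0 ^+ 2) / 2.
  move=> i; set x := u i 0; set y := v i 0.
  have e : ((t / s) * x ^+ 2 + (s / t) * y ^+ 2) / 2 - x * y
         = (t * x - s * y) ^+ 2 / (2 * s * t).
    by field; rewrite ?gt_eqF.
  by rewrite -subr_ge0 e divr_ge0 ?sqr_ge0 // !mulr_ge0 // ltW.
apply: le_trans (ler_sum _ (fun i _ => key i)) _.
rewrite -mulr_suml big_split /= -!mulr_sumr -!enorm_sq -/s -/t.
rewrite le_eqVlt; apply/orP; left; apply/eqP; field; rewrite ?gt_eqF //.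
Qed.

Lemma enorm_triangle n (u v : 'cV[R]_n) : enorm (u + v) <= enorm u + enorm v.
Proof.
rewrite -(ler_pXn2r (n:=2)) // ?nnegrE ?addr_ge0 ?enorm_ge0 //.
rewrite enorm_sq sqrrD !enorm_sq.
have -> : \sum_i (u + v) i 0 ^+ 2 = \sum_i u i 0 ^+ 2 + (\sum_i u i 0 * v i 0) *+ 2 + \sum_i v i 0 ^+ 2.
  rewrite -sumrMnl -!big_split /=; apply: eq_bigr => i _; rewrite mxE sqrrD //.
by rewrite lerD2r lerD2l lerMn2r /= cs_sum.
Qed.

Lemma specnorm_bounded m n (A : 'M[R]_(m, n)) :
  has_ubound [set enorm (A *m v) | v in [set v : 'cV[R]_n | enorm v <= 1]].
Proof.
exists (Num.sqrt (\sum_i (\sum_j `|A i j|) ^+ 2)).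
move=> _ [v /= hv <-]; rewrite enormE ler_sqrt; last by apply: sumr_ge0 => i _; exact: sqr_ge0.
apply: ler_sum => i _; rewrite -real_normK ?num_real // ler_sqr ?nnegrE ?normr_ge0 ?sumr_ge0 //.
rewrite mxE; apply: le_trans (ler_norm_sum _ _ _) _; apply: ler_sum => j _.
rewrite normrM ler_piMr ?normr_ge0 //; exact: le_trans (enorm_coord v j) hv.
Qed.

Lemma enorm_zero n : enorm (0 : 'cV[R]_n) = 0.
Proof. by rewrite enormE big1 ?sqrtr0 // => i _; rewrite mxE expr0n. Qed.

Lemma specnorm_ge0 m n (A : 'M[R]_(m, n)) : 0 <= specnorm A.
Proof.
have Ex : [set enorm (A *m v) | v in [set v : 'cV[R]_n | enorm v <= 1]] (enorm (A *m (0 : 'cV[R]_n))).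
  by exists (0 : 'cV[R]_n) => //=; rewrite enorm_zero ler01.
have h := ub_le_sup (specnorm_bounded A) Ex.
by rewrite mulmx0 enorm_zero in h.
Qed.

Lemma specnormP m n (A : 'M[R]_(m, n)) (v : 'cV[R]_n) : enorm (A *m v) <= specnorm A * enorm v.
Proof.
have [v0|nv] := eqVneq (enorm v) 0.
  by rewrite (enorm0 _ v0) mulmx0 !enorm_zero mulr0.
have r0 : 0 < enorm v by rewrite lt_def nv enorm_ge0.
have h : enorm (A *m ((enorm v)^-1 *: v)) <= specnorm A.
  rewrite /specnorm; apply: (ub_le_sup (specnorm_bounded A)); exists ((enorm v)^-1 *: v) => //=.
  by rewrite enormZ ger0_norm ?invr_ge0 ?enorm_ge0 // mulVf.
rewrite -scalemxAr enormZ ger0_norm ?invr_ge0 ?enorm_ge0 // in h.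
rewrite mulrC -[enorm (A *m v)](mulfVK nv) [_ / _]mulrC mulrC.
rewrite [X in X <= _]mulrC [_ / _]mulrC.
by apply: ler_wpM2l; [exact: enorm_ge0 | exact: h].
Qed.

End Aux.

Lemma zmod_aux (V : zmodType) (p q r s : V) : p + (q + r) - (s + q) = (p - s) + r.
Proof. by rewrite opprD addrACA [q + r]addrC addrK. Qed.

Theorem mainTheorem1 (R : realType) (N P T : nat)
  (hN : (0 < N)%N) (hP : (0 < P)%N) (hT : (0 < T)%N)
  (a b eps : R) (ha0 : 0 < a) (ha1 : a < 1) (hb : 0 < b) (heps : 0 < eps)
  (A : nat -> 'M[R]_N) (B : 'M[R]_(N, P)) (x dx : nat -> 'cV[R]_P)
  (hA : forall t : nat, (1 <= t <= T)%N ->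
          specnorm (A t) <= a * expR (t%:R - T%:R))
  (hB : specnorm B <= b)
  (hdx : forall t : nat, (1 <= t <= T)%N -> enorm (dx t) <= eps) :
  let xbar := fun t => x t + dx t in
  let Delta := fun t => hstate A B xbar t - hstate A B x t in
  (forall t : nat, (1 <= t <= T)%N ->
     enorm (Delta t) <= eps * b * (1 / (1 - a * expR (t%:R - T%:R))))
  /\ enorm (Delta T) <= eps * b / (1 - a).
Proof.
move=> xbar Delta.
have rec : forall t, Delta t.+1 = A t.+1 *m Delta t + B *m dx t.+1.
  move=> t; rewrite /Delta /= /xbar mulmxDr mulmxBr; exact: zmod_aux.
set c := fun t : nat => a * expR (t%:R - T%:R).
have cpos t : 0 < c t by rewrite /c mulr_gt0 ?expR_gt0.
have clt t : (t <= T)%N -> c t < 1.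
  move=> ht; apply: le_lt_trans ha1; by rewrite /c ler_piMr ?expR_le1 ?subr_le0 ?ler_nat // ltW.
have cmono t : c t <= c t.+1.
  rewrite /c; apply: ler_wpM2l; first exact: ltW.
  by rewrite ler_expR lerD2r ler_nat.
have main : forall t, (t <= T)%N -> enorm (Delta t) <= eps * b / (1 - c t).
  elim => [_|t IH HT].
    rewrite /Delta /= subr0 enorm_zero; have := clt 0%N (leq0n T) => c0.
    apply: divr_ge0; first by apply: mulr_ge0; exact: ltW.
    by rewrite subr_ge0 ltW.
  have IH' := IH (ltnW HT).
  have h1 : (1 <= t.+1 <= T)%N by rewrite HT.
  have c1 := clt _ HT; have c0 := clt _ (ltnW HT).
  have cp := cpos t; have cp' := cpos t.+1; have cm := cmono t.
  rewrite rec. apply: le_trans (enorm_triangle _ _) _.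
  apply: le_trans (lerD (specnormP _ _) (specnormP _ _)) _.
  apply: le_trans (_ : c t.+1 * (eps * b / (1 - c t)) + b * eps <= _).
    apply: lerD.
      apply: le_trans (ler_wpM2r (enorm_ge0 _) (hA _ h1)) _.
      by apply: ler_wpM2l; [exact: ltW | exact: IH'].
    apply: le_trans (ler_wpM2r (enorm_ge0 _) hB) _.
    by apply: ler_wpM2l; [exact: ltW | exact: hdx].
  move: c1 c0 cp cp' cm; set u := c t; set v := c t.+1 => c1 c0 cp cp' cm.
  have e : eps * b / (1 - v) - (v * (eps * b / (1 - u)) + b * eps)
         = eps * b * v * (v - u) / ((1 - v) * (1 - u)).
    by field; rewrite !subr_eq0 !gt_eqF.
  rewrite -subr_ge0 e; apply: divr_ge0.
    rewrite mulr_ge0 ?subr_ge0 //; apply: mulr_ge0; last exact: ltW.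
    by apply: mulr_ge0; exact: ltW.
  by apply: mulr_ge0; rewrite subr_ge0 ltW.
split.
  move=> t /andP [_ ht]; rewrite mulrA mulr1; exact: main.
have := main T (leqnn T); by rewrite /c subrr expR0 mulr1.
Qed.
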